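(* Let $a$ and $b$ be positive integers. There exists a graph $G$ with $\gamma^{LD}(G)=a$ and $\gamma^{SLD}(G)=b$ if and only if $0\le b-a\le 2^a-1$.
   Context: Graphs are finite, simple and undirected, and need not be connected. For a vertex $u$, $N(u)$ is its set of neighbours and $N[u]=N(u)\cup\{u\}$. A code is a non-empty subset $C$ of the vertex set $V$; $I(C;u)=N[u]\cap C$. A code $C$ is locating-dominating if for all distinct $u,v\in V\setminus C$ we have $I(C;u)\neq\emptyset$ and $I(C;u)\ne I(C;v)$. A code $C$ is self-locating-dominating if for every $u\in V\setminus C$ we have $I(C;u)\neq\emptyset$ and $\bigcap_{c\in I(C;u)}N[c]=\{u\}$. $\gamma^{LD}(G)$ and $\gamma^{SLD}(G)$ are the minimum sizes of a locating-dominating and a self-locating-dominating code in $G$. *)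

(* Defs.v *)
From mathcomp Require Import all_boot.
Set Implicit Arguments. Unset Strict Implicit. Unset Printing Implicit Defensive.

Definition simple_graph (T : finType) (e : rel T) : Prop :=
  symmetric e /\ irreflexive e.

Definition cnbh (T : finType) (e : rel T) (u : T) : {set T} :=
  [set v | (v == u) || e u v].

Definition Iset (T : finType) (e : rel T) (C : {set T}) (u : T) : {set T} :=
  cnbh e u :&: C.

Definition is_LD (T : finType) (e : rel T) (C : {set T}) : bool :=
  (C != set0) &&
  [forall u, (u \notin C) ==> (Iset e C u != set0)] &&
  [forall u, forall v, [&& u \notin C, v \notin C & u != v] ==> (Iset e C u != Iset e C v)].

Definition is_SLD (T : finType) (e : rel T) (C : {set T}) : bool :=
  (C != set0) &&
  [forall u, (u \notin C) ==>
     (Iset e C u != set0) && (\bigcap_(c in Iset e C u) cnbh e c == [set u])].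

(* minimum sizes; the default #|T| is irrelevant whenever T is nonempty,
   since then T itself is such a code *)
Definition gamma_LD (T : finType) (e : rel T) : nat :=
  \big[minn/#|T|]_(C : {set T} | is_LD e C) #|C|.

Definition gamma_SLD (T : finType) (e : rel T) : nat :=
  \big[minn/#|T|]_(C : {set T} | is_SLD e C) #|C|.

(* Main.v *)
Require Import Defs.
From mathcomp Require Import all_boot zify.
Set Implicit Arguments. Unset Strict Implicit. Unset Printing Implicit Defensive.


Lemma bigmin_le (I : eqType) (r : seq I) (P : pred I) (F : I -> nat) x0 i :
  i \in r -> P i -> \big[minn/x0]_(j <- r | P j) F j <= F i.
Proof.
elim: r => // j r IH; rewrite inE big_cons => /orP[/eqP <- -> | hi hP].
  exact: geq_minl.
case: (P j); last exact: IH.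
by rewrite geq_min IH ?orbT.
Qed.

Section Gen.
Variables (T : finType) (e : rel T).

Lemma LD_le C : is_LD e C -> gamma_LD e <= #|C|.
Proof.
by move=> h; apply: bigmin_le => //; rewrite mem_index_enum.
Qed.

Lemma SLD_le C : is_SLD e C -> gamma_SLD e <= #|C|.
Proof.
by move=> h; apply: bigmin_le => //; rewrite mem_index_enum.
Qed.

Lemma LD_lb n : (forall C, is_LD e C -> n <= #|C|) -> n <= #|T| -> n <= gamma_LD e.
Proof.
move=> h hT; rewrite /gamma_LD; apply: (big_ind (fun x => n <= x)) => //.
by move=> x y hx hy; rewrite leq_min hx hy.
Qed.

Lemma SLD_lb n : (forall C, is_SLD e C -> n <= #|C|) -> n <= #|T| -> n <= gamma_SLD e.
Proof.
move=> h hT; rewrite /gamma_SLD; apply: (big_ind (fun x => n <= x)) => //.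
by move=> x y hx hy; rewrite leq_min hx hy.
Qed.

Lemma setT_SLD (x : T) : is_SLD e setT.
Proof.
rewrite /is_SLD; apply/andP; split.
  by apply/set0Pn; exists x; rewrite inE.
by apply/forallP => u; rewrite inE.
Qed.

Lemma SLD_LD C : is_SLD e C -> is_LD e C.
Proof.
case/andP=> h0 /forallP h; rewrite /is_LD h0 /=; apply/andP; split.
  apply/forallP => u; apply/implyP => hu.
  by have /implyP/(_ hu)/andP[] := h u.
apply/forallP => u; apply/forallP => v; apply/implyP => /and3P[hu hv huv].
apply/negP => /eqP hI.
have /implyP/(_ hu)/andP[_ /eqP Hu] := h u.
have /implyP/(_ hv)/andP[_ /eqP Hv] := h v.
move: Hu; rewrite hI Hv => /set1_inj Heq.
by move: huv; rewrite Heq eqxx.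
Qed.

Lemma setT_LD (x : T) : is_LD e setT.
Proof. exact: SLD_LD (setT_SLD x). Qed.

Lemma gamma_LD_ex : 0 < gamma_LD e -> exists C, is_LD e C /\ gamma_LD e = #|C|.
Proof.
pose K := fun x => x = #|T| \/ exists C, is_LD e C /\ x = #|C|.
have : K (gamma_LD e).
  rewrite /gamma_LD; apply: big_ind.
  - by rewrite /K; left.
  - by move=> x y hx hy; case: (leqP x y).
  - by move=> C hC; rewrite /K; right; exists C.
rewrite /K; case=> // ->; case/card_gt0P => x _; exists setT; split; first exact: setT_LD x.
by rewrite cardsT.
Qed.

Lemma gamma_SLD_ex : 0 < gamma_SLD e -> exists C, is_SLD e C /\ gamma_SLD e = #|C|.
Proof.
pose K := fun x => x = #|T| \/ exists C, is_SLD e C /\ x = #|C|.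
have : K (gamma_SLD e).
  rewrite /gamma_SLD; apply: big_ind.
  - by rewrite /K; left.
  - by move=> x y hx hy; case: (leqP x y).
  - by move=> C hC; rewrite /K; right; exists C.
rewrite /K; case=> // ->; case/card_gt0P => x _; exists setT; split; first exact: setT_SLD x.
by rewrite cardsT.
Qed.

Lemma LD_count D (A : {set T}) : is_LD e D ->
  (forall u, u \notin D -> Iset e D u \subset A) -> #|~: D| < 2 ^ #|D :&: A|.
Proof.
case/andP=> /andP[_ /forallP h1] /forallP h2 hA.
have inj : {in ~: D &, injective (Iset e D)}.
  move=> u v; rewrite !inE => hu hv hI; apply/eqP; apply/negPn/negP => huv.
  have /forallP/(_ v)/implyP := h2 u.
  by rewrite hu hv huv hI eqxx => /(_ isT).
rewrite -(card_in_imset inj).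
have sub : [set Iset e D x | x in ~: D] \subset powerset (D :&: A) :\ set0.
  apply/subsetP => S /imsetP[u]; rewrite inE => hu ->.
  rewrite !inE; have /implyP/(_ hu) -> := h1 u; rewrite /=.
  rewrite subsetI hA // andbT /Iset; exact: subsetIr.
apply: (leq_ltn_trans (subset_leq_card sub)).
have := cardsD1 set0 (powerset (D :&: A)).
rewrite card_powerset !inE sub0set /= => ->.
by rewrite add1n ltnSn.
Qed.

Lemma forced D u : symmetric e -> is_SLD e D ->
  ((exists v, v != u /\ forall w, e u w -> (w == v) || e v w) \/ (forall w, ~~ e u w)) ->
  u \in D.
Proof.
move=> hsym /andP[_ /forallP h] hyp; apply/negPn/negP => hu.
have /implyP/(_ hu)/andP[/set0Pn[c hc] /eqP hI] := h u.
case: hyp => [[v [hvu hv]] | hiso].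
  have : v \in \bigcap_(c in Iset e D u) cnbh e c.
    apply/bigcapP => c' hc'.
    move: hc'; rewrite /Iset !inE => /andP[/orP[/eqP ->|hec] hD'];
      first by rewrite hD' in hu.
    move: (hv _ hec) => /orP[/eqP->|hvc]; first by rewrite eqxx.
    by rewrite hsym hvc orbT.
  by rewrite hI inE (negbTE hvu).
move: hc; rewrite /Iset !inE => /andP[/orP[/eqP ->|hec] hcD].
  by rewrite hcD in hu.
by rewrite (negbTE (hiso c)) in hec.
Qed.

Lemma iso_LD D u : is_LD e D -> (forall w, ~~ e u w) -> u \in D.
Proof.
case/andP=> /andP[_ /forallP h1] _ hiso; apply/negPn/negP => hu.
have /implyP/(_ hu)/set0Pn[c] := h1 u.
rewrite /Iset !inE => /andP[/orP[/eqP ->|hec] hcD].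
  by rewrite hcD in hu.
by rewrite (negbTE (hiso c)) in hec.
Qed.

End Gen.


Lemma forward (T : finType) (e : rel T) a b : 0 < a -> 0 < b ->
  gamma_LD e = a -> gamma_SLD e = b -> a <= b /\ b - a <= 2 ^ a - 1.
Proof.
move=> ha hb hLD hSLD.
have [C [hC hCa]] := gamma_LD_ex (e:=e) (ltac:(by rewrite hLD)).
have [D [hD hDb]] := gamma_SLD_ex (e:=e) (ltac:(by rewrite hSLD)).
split; first by rewrite -hLD -hSLD hDb; apply: LD_le; apply: SLD_LD.
have /set0Pn[x _] : C != set0 by case/andP: hC => /andP[].
have hbT : b <= #|T| by rewrite -hSLD -cardsT; apply: SLD_le; apply: setT_SLD x.
have hcnt := LD_count (A := setT) hC (fun u _ => subsetT _).
rewrite setIT -hCa hLD in hcnt.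
have hT := cardsC C; rewrite -hCa hLD in hT.
have : 0 < 2 ^ a by rewrite expn_gt0.
lia.
Qed.


Section Constr.
Variables (k' : nat) (fam : {set {set 'I_k'.+1}}) (r : nat).
Local Notation k := k'.+1.

Definition anc (i : 'I_k) : {set 'I_k} := if i == ord0 then setT else setT :\ i.
Definition XT := {S : {set 'I_k} | S \in fam}.
Definition VT := (('I_k + XT) + 'I_r)%type.
Definition EG (u v : VT) : bool :=
  match u, v with
  | inl (inl _), inl (inl _) => true
  | inl (inl i), inl (inr y) => i \in val y
  | inl (inr x), inl (inr y) => [exists i, (val x == anc i) && (i \in val y)]
  | _, _ => false
  end.
Definition eG : rel VT := fun u v => (u != v) && (EG u v || EG v u).

Lemma eG_simple : simple_graph eG.
Proof.
split; first by move=> u v; rewrite /eG eq_sym orbC.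
by move=> u; rewrite /eG eqxx.
Qed.

Lemma mem_anc i j : (j \in anc i) = (i == ord0) || (j != i).
Proof. by rewrite /anc; case: eqP => _; rewrite !inE ?andbT. Qed.

Lemma anc_inj i j : anc i = anc j -> i = j.
Proof.
move=> h; apply/eqP; apply: contraT => hij.
have hi : i \in anc j by rewrite mem_anc hij orbT.
have hj : j \in anc i by rewrite mem_anc (eq_sym j) hij orbT.
rewrite -h mem_anc eqxx orbF in hi; rewrite h mem_anc eqxx orbF in hj.
move/eqP: hi => hi; move/eqP: hj => hj.
by move: hij; rewrite hi hj eqxx.
Qed.

Hypothesis hA : forall i, anc i \in fam.
Hypothesis h0 : set0 \notin fam.

Lemma all_forced (u : VT) :
  (exists v, v != u /\ forall w, eG u w -> (w == v) || eG v w) \/ (forall w, ~~ eG u w).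
Proof.
case: u => [[i|x]|j].
- left; exists (inl (inr (exist _ (anc i) (hA i)))); split => //.
  case=> [[j|y]|j] //.
  + rewrite /eG /= andbT => hij.
    by rewrite mem_anc; apply/orP; right; apply/eqP => hji; rewrite hji eqxx in hij.
  + rewrite /eG /= orbF => hiy.
    case: eqP => //= hne; apply/andP; split; first by apply/eqP => h; apply: hne; rewrite h.
    by apply/orP; left; apply/existsP; exists i; rewrite eqxx hiy.
- case: (boolP [exists i, val x == anc i]) => [/existsP[i0 /eqP hi0]|hno].
  + left; exists (inl (inl i0)); split => //.
    case=> [[l|y]|j] //.
    * by rewrite /eG /= => _; rewrite andbT eq_sym orbN.

    * rewrite /eG /= orbF => /andP[hxy /orP[/existsP[l /andP[/eqP hl hly]]|/existsP[l /andP[/eqP hl hlx]]]].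
        by move: hl; rewrite hi0 => /anc_inj ->.
      rewrite hl mem_anc; apply/orP; right; apply/eqP => hli.
      have ey : y = x by apply: val_inj; rewrite /= hl -hli hi0.
      by rewrite ey eqxx in hxy.

  + left; exists (inl (inl ord0)); split => //.
    case=> [[l|y]|j] //.
    * by rewrite /eG /= => _; rewrite andbT eq_sym orbN.

    * rewrite /eG /= orbF => /andP[hxy /orP[/existsP[l /andP[/eqP hl hly]]|/existsP[l /andP[/eqP hl hlx]]]].
        by exfalso; move: hno; rewrite negb_exists => /forallP/(_ l)/negP; apply; apply/eqP.
      by rewrite hl mem_anc eq_sym orbN.
- by right; case=> [[?|?]|?]; rewrite /eG /= ?andbF ?orbF.
Qed.


Definition D0 : {set VT} := [set u | if u is inl (inr _) then false else true].

Lemma card_VT : #|{: VT}| = k + #|fam| + r.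
Proof.
rewrite !card_sum !card_ord card_sig.
by have -> : #|[pred x in fam]| = #|fam| by apply: eq_card.
Qed.

Lemma card_D0 : #|D0| = k + r.
Proof.
have injx : injective (fun x : XT => (inl (inr x) : VT)) by move=> ? ? [].
have hC : ~: D0 = [set (inl (inr x) : VT) | x : XT].
  apply/setP => u; rewrite !inE; case: u => [[i|x]|j] /=.
  - by apply/esym/negbTE/imsetP => [[? _]].
  - by apply/esym/imsetP; exists x.
  - by apply/esym/negbTE/imsetP => [[? _]].
have := cardsC D0; rewrite hC card_imset // card_VT card_sig.
have -> : #|[pred x in fam]| = #|fam| by apply: eq_card.
move=> h; lia.
Qed.

Lemma Iset_x (x : XT) i : ((inl (inl i) : VT) \in Iset eG D0 (inl (inr x))) = (i \in val x).
Proof. by rewrite /Iset !inE /eG /= andbT. Qed.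

Lemma D0_LD : is_LD eG D0.
Proof.
apply/andP; split; [apply/andP; split|].
- by apply/set0Pn; exists (inl (inl ord0)); rewrite inE.
- apply/forallP; case=> [[i|x]|j]; rewrite inE //=.
  have : val x != set0 by apply: contraNneq h0 => <-; exact: (valP x).
  case/set0Pn => i hi; apply/set0Pn; exists (inl (inl i)); by rewrite Iset_x.
- apply/forallP; case=> [[i|x]|j]; apply/forallP; case=> [[i'|y]|j']; rewrite !inE //=.
  apply/implyP => hxy; apply/negP => /eqP hI.
  have : x = y.
    apply: val_inj; apply/setP => i; by rewrite -!Iset_x hI.
  by move=> exy; rewrite exy eqxx in hxy.
Qed.


Definition Act : {set VT} := [set u | if u is inl _ then true else false].

Lemma edge_act u w : eG u w -> (u \in Act) && (w \in Act).
Proof. by case: u => [[?|?]|?]; case: w => [[?|?]|?]; rewrite /eG /= ?inE ?andbF. Qed.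

Lemma LD_lower D : 2 ^ k' <= #|fam| -> is_LD eG D -> k + r <= #|D|.
Proof.
move=> hfam hD.
have injr : injective (fun j : 'I_r => (inr j : VT)) by move=> ? ? [].
have hCA : ~: Act = [set (inr j : VT) | j : 'I_r].
  apply/setP => u; rewrite !inE; case: u => [[i|x]|j] /=.
  - by apply/esym/negbTE/imsetP => [[? _]].
  - by apply/esym/negbTE/imsetP => [[? _]].
  - by apply/esym/imsetP; exists j.
have cA : #|~: Act| = r by rewrite hCA card_imset // card_ord.
have sub : ~: Act \subset D.
  apply/subsetP => u; rewrite hCA => /imsetP[j _ ->].
  apply: iso_LD hD _ => w; apply/negP => /edge_act/andP[]; by rewrite inE.
have hI : forall u, u \notin D -> Iset eG D u \subset Act.
  move=> u hu; have hu' : u \in Act.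
    by apply: contraR hu => hu; apply: (subsetP sub); rewrite inE.
  apply/subsetP => w hw; have : (w == u) || eG u w by move: hw; rewrite /Iset !inE => /andP[].
  by case/orP => [/eqP -> // | /edge_act/andP[]].
have cnt := LD_count hD hI.
have e1 := cardsID Act D.
have e2 : D :\: Act = ~: Act by rewrite setDE; apply/setIidPr.
rewrite e2 cA in e1.
have e3 := cardsC D; rewrite card_VT in e3.
case: (leqP k #|D :&: Act|) => hk; first by rewrite -e1 leq_add2r.
have : 2 ^ #|D :&: Act| <= 2 ^ k' by rewrite leq_pexp2l.
lia.
Qed.

Lemma gammaLD_G : 2 ^ k' <= #|fam| -> gamma_LD eG = k + r.
Proof.
move=> hfam; apply/eqP; rewrite eqn_leq; apply/andP; split.
  by rewrite -card_D0; apply: LD_le; apply: D0_LD.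
apply: LD_lb; first by move=> C; apply: LD_lower.
by rewrite card_VT; lia.
Qed.

Lemma gammaSLD_G : gamma_SLD eG = k + #|fam| + r.
Proof.
rewrite -card_VT; apply/eqP; rewrite eqn_leq; apply/andP; split.
  by rewrite -cardsT; apply: SLD_le; apply: (setT_SLD _ (inl (inl ord0))).
apply: SLD_lb => // C hC; rewrite -cardsT; apply: subset_leq_card.
apply/subsetP => u _; apply: forced hC _; first by case: eG_simple.
exact: all_forced.
Qed.

End Constr.


Lemma exists_mid (T : finType) (Q : {set T}) n d : forall P : {set T},
  n - #|P| = d -> P \subset Q -> #|P| <= n -> n <= #|Q| ->
  exists R : {set T}, [/\ P \subset R, R \subset Q & #|R| = n].
Proof.
elim: d => [|d IH] P hd hPQ hPn hnQ.
  by exists P; split => //; apply/eqP; rewrite eqn_leq hPn /= -subn_eq0 hd.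
have : ~~ (Q \subset P).
  apply/negP => hQP; have := subset_leq_card hQP; lia.
case/subsetPn => x hxQ hxP.
have [R [h1 h2 h3]] := IH (x |: P) (ltac:(rewrite cardsU1 hxP; lia))
  (ltac:(by rewrite subUset sub1set hxQ hPQ)) (ltac:(rewrite cardsU1 hxP; lia)) hnQ.
by exists R; split => //; apply: subset_trans h1; apply: subsetUr.
Qed.

Lemma fam_ex k' m : k'.+1 <= m -> m < 2 ^ k'.+1 ->
  exists fam : {set {set 'I_k'.+1}},
    [/\ forall i, anc i \in fam, set0 \notin fam & #|fam| = m].
Proof.
move=> hkm hm.
set P := [set anc i | i : 'I_k'.+1].
set Q := powerset [set: 'I_k'.+1] :\ set0.
have hPQ : P \subset Q.
  apply/subsetP => S /imsetP[i _ ->]; rewrite !inE subsetT andbT.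
  by apply/set0Pn; exists ord0; rewrite mem_anc eq_sym orbN.
have hP : #|P| <= m.
  apply: leq_trans (leq_imset_card _ _) _; by rewrite ?cardsT card_ord.
have hQ : #|Q| = 2 ^ k'.+1 - 1.
  have := cardsD1 set0 (powerset [set: 'I_k'.+1]).
  rewrite card_powerset cardsT card_ord !inE sub0set /= => ->; rewrite /Q; lia.
have [R [h1 h2 h3]] := exists_mid (erefl _) hPQ hP (ltac:(rewrite hQ; lia)).
exists R; split => //.
  by move=> i; apply: (subsetP h1); apply/imsetP; exists i.
by apply/negP => /(subsetP h2); rewrite !inE eqxx.
Qed.

Lemma iso_case a : 0 < a ->
  exists (T : finType) (e : rel T), simple_graph e /\ gamma_LD e = a /\ gamma_SLD e = a.
Proof.
move=> ha; exists ('I_a : finType), (fun _ _ => false); split; first by split.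
have allin : forall C : {set 'I_a}, is_LD (fun _ _ => false) C -> a <= #|C|.
  move=> C hC; rewrite -{1}(card_ord a) -cardsT; apply: subset_leq_card.
  by apply/subsetP => u _; apply: iso_LD hC _.
split; apply/eqP; rewrite eqn_leq; apply/andP; split.
- by have := LD_le (setT_LD (fun _ _ : 'I_a => false) (Ordinal ha)); rewrite cardsT card_ord.
- by apply: LD_lb => //; rewrite card_ord.
- by have := SLD_le (setT_SLD (fun _ _ : 'I_a => false) (Ordinal ha)); rewrite cardsT card_ord.
- apply: SLD_lb; last by rewrite card_ord.
  by move=> C /SLD_LD; apply: allin.
Qed.

Unset Implicit Arguments.

Theorem mainTheorem19 (a b : nat) (ha : 0 < a) (hb : 0 < b) :
  (exists (T : finType) (e : rel T),
      simple_graph e /\ gamma_LD e = a /\ gamma_SLD e = b)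
  <-> (a <= b /\ b - a <= 2 ^ a - 1).
Proof.
split.
  by move=> [T [e [_ [hLD hSLD]]]]; exact: forward ha hb hLD hSLD.
move=> [hab hba].
case hm0: (b - a == 0).
  have -> : b = a by lia.
  exact: iso_case.
have hm : 0 < b - a by lia.
set m := b - a in hm hba hm0 *.
set k' := trunc_log 2 m.
have h1 : 2 ^ k' <= m by apply: trunc_logP.
have h2 : m < 2 ^ k'.+1 by apply: trunc_log_ltn.
have h3 : k' < 2 ^ k' by apply: ltn_expl.
have h4 : 0 < 2 ^ a by rewrite expn_gt0.
have hka : k' < a.
  by rewrite -(ltn_exp2l _ _ (isT : 1 < 2)); lia.
have [fam [hA h0 hcard]] := fam_ex (ltac:(lia) : k'.+1 <= m) h2.
exists (VT fam (a - k'.+1)), (@eG k' fam (a - k'.+1)).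
split; first exact: eG_simple.
split.
  rewrite (gammaLD_G (a - k'.+1) h0 (ltac:(lia))); lia.
rewrite (gammaSLD_G (a - k'.+1) hA); lia.
Qed.
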